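(* Let $G=(\mathcal{V},\mathcal{E})$ be a simple connected graph and $\mathcal{R}\subseteq\mathcal{V}$ a resolution set of $G$. If a pair $\{i,j\}$ of distinct nodes is invisible with respect to $\mathcal{R}$, then $i\notin\mathcal{R}$, $j\notin\mathcal{R}$, and $\Delta_{ij}=1$. Likewise, if $\{i,j\}$ is ambiguous with respect to $\mathbf{P}_{\mathcal{R}}$, then $i\notin\mathcal{R}$, $j\notin\mathcal{R}$ and $\Delta_{ij}=1$ (computed from $\mathbf{P}_{\mathcal{R}}$).
   Context: All graphs are simple, undirected and connected. $h_{ij}$ is the shortest-path distance between nodes $i,j$. For an ordered landmark set $\mathcal{M}=\{A_1,\dots,A_m\}\subseteq\mathcal{V}$, $\mathbf{P}_{\mathcal{M}}(i)=\langle h_{iA_1},\dots,h_{iA_m}\rangle$, and $\mathbf{P}_{\mathcal{M}}$ is the matrix with these rows. $\mathcal{M}$ is a resolution set if the $\mathbf{P}_{\mathcal{M}}(i)$ are pairwise distinct. For nodes $i,j$ define $\Delta^k_{ij}=|h_{iA_k}-h_{jA_k}|$ and $\Delta_{ij}=\max_{1\le k\le m}\Delta^k_{ij}$. A pair $\{i,j\}$ is invisible with respect to $\mathcal{M}$ if adding the edge $\{i,j\}$ (when absent) or removing it (when present) does not change any entry of $\mathbf{P}_{\mathcal{M}}$. A pair $\{i,j\}$ is ambiguous with respect to a given matrix $\mathbf{P}_{\mathcal{M}}$ if there exist two simple connected graphs on $\mathcal{V}$, both having distance vector matrix $\mathbf{P}_{\mathcal{M}}$ for $\mathcal{M}$,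 such that $\{i,j\}$ is an edge of one and not of the other. *)

(* Defs.v *)
From mathcomp Require Import all_boot.
Set Implicit Arguments. Unset Strict Implicit. Unset Printing Implicit Defensive.

Definition simple_graph (T : finType) (e : rel T) : Prop :=
  symmetric e /\ irreflexive e.

Definition connected_graph (T : finType) (e : rel T) : Prop :=
  forall x y : T, connect e x y.

Definition walk_k (T : finType) (e : rel T) (k : nat) (x y : T) : bool :=
  [exists p : k.-tuple T, path e x p && (last x p == y)].

(* shortest-path distance h_xy (equals #|T| if y unreachable from x) *)
Definition dist (T : finType) (e : rel T) (x y : T) : nat :=
  find (fun k => walk_k e k x y) (iota 0 #|T|).

Definition dvec (T : finType) (e : rel T) (M : seq T) (i : T) : seq nat :=
  [seq dist e i A | A <- M].

Definition resolving (T : finType) (e : rel T) (M : seq T) : Prop :=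
  forall i j : T, dvec e M i = dvec e M j -> i = j.

Definition toggle (T : finType) (e : rel T) (i j : T) : rel T :=
  fun x y => if ((x == i) && (y == j)) || ((x == j) && (y == i))
             then ~~ e x y else e x y.

Definition invisible (T : finType) (e : rel T) (M : seq T) (i j : T) : Prop :=
  forall x : T, dvec (toggle e i j) M x = dvec e M x.

Definition ambiguous (T : finType) (e : rel T) (M : seq T) (i j : T) : Prop :=
  exists e1 e2 : rel T,
    [/\ simple_graph e1 /\ connected_graph e1,
        simple_graph e2 /\ connected_graph e2,
        (forall x, dvec e1 M x = dvec e M x),
        (forall x, dvec e2 M x = dvec e M x) & e1 i j != e2 i j].

Definition absdiff (m n : nat) : nat := (m - n) + (n - m).

Definition Delta (T : finType) (e : rel T) (M : seq T) (i j : T) : nat :=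
  \max_(A <- M) absdiff (dist e i A) (dist e j A).

(* Main.v *)
Require Import Defs.
From mathcomp Require Import all_boot.
From mathcomp Require Import zify.

Section Aux.
Variable T : finType.

Lemma dist_size (e : rel T) x y : dist e x y <= #|T|.
Proof. by rewrite /dist -{2}(size_iota 0 #|T|) find_size. Qed.

Lemma dist_le (e : rel T) k x y : walk_k e k x y -> k < #|T| -> dist e x y <= k.
Proof.
move=> Hw Hk; rewrite /dist -ltnS; apply: find_ltn.
rewrite take_iota; apply/hasP; exists k => //.
by rewrite mem_iota add0n leq0n /= leq_min leqnn Hk.
Qed.

Lemma dist_walk (e : rel T) x y : dist e x y < #|T| -> walk_k e (dist e x y) x y.
Proof.
move=> H.
have Hh : has (fun k => walk_k e k x y) (iota 0 #|T|).
  by rewrite has_find size_iota.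
have := nth_find 0 Hh; rewrite nth_iota //.
Qed.

Arguments dist_walk {e x y}.
Arguments dist_le {e k x y}.

Lemma walk0 (e : rel T) x y : walk_k e 0 x y -> x = y.
Proof.
by move=> /existsP [[[|a s] Hs] /andP [_ /eqP]].
Qed.

Lemma walk1 (e : rel T) x y : walk_k e 1 x y = e x y.
Proof.
apply/existsP/idP.
  move=> [[[|a [|b s]] Hs] /andP [Hp /eqP Hl]] //=.
  by move: Hp Hl => /= /andP [Hp _] <-.
move=> H; exists [tuple y]; by rewrite /= H eqxx.
Qed.

Lemma walkS (e : rel T) k x y z : e x y -> walk_k e k y z -> walk_k e k.+1 x z.
Proof.
move=> Hxy /existsP [p /andP [Hp Hl]]; apply/existsP; exists [tuple of y :: p].
by rewrite /= Hxy Hp.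
Qed.

Arguments walkS {e k x y z}.

Lemma card_ge2 (x y : T) : x != y -> 1 < #|T|.
Proof.
move=> Hxy; have := subset_leq_card (subsetT [set x; y]).
by rewrite cardsT cards2 Hxy.
Qed.

Lemma dist1 (e : rel T) x y : x != y -> (dist e x y == 1) = e x y.
Proof.
move=> Hxy; have H2 := @card_ge2 x y Hxy.
apply/eqP/idP.
  move=> Hd; rewrite -walk1 -Hd; apply: dist_walk; by rewrite Hd.
move=> He; have Hle : dist e x y <= 1 by apply: dist_le; rewrite ?walk1.
case Hd: (dist e x y) Hle => [|[|n]] // _.
have Hlt : dist e x y < #|T| by rewrite Hd; exact: ltnW.
have := dist_walk Hlt; rewrite Hd => /walk0 Exy; by rewrite Exy eqxx in Hxy.
Qed.

Arguments dist1 e {x y}.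

Lemma dist_tri (e : rel T) x y A : e x y -> dist e x A <= (dist e y A).+1.
Proof.
move=> Hxy.
have := dist_size e y A; rewrite leq_eqVlt => /orP [/eqP ->|Hlt].
  exact: leq_trans (dist_size _ _ _) (leqnSn _).
have Hw := walkS Hxy (dist_walk Hlt).
case: (ltnP (dist e y A).+1 #|T|) => H.
  exact: dist_le Hw H.
exact: leq_trans (dist_size _ _ _) H.
Qed.

Arguments dist_tri {e x y} A.

Lemma dvec_mem (e1 e2 : rel T) R x A :
  dvec e1 R x = dvec e2 R x -> A \in R -> dist e1 x A = dist e2 x A.
Proof.
elim: R => //= a R IH [H1 H2]; rewrite in_cons => /orP [/eqP ->|]//.
exact: IH.
Qed.

Arguments dvec_mem {e1 e2 R x A}.

Lemma mem_contra (e1 e2 : rel T) R i j : i != j ->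
  (forall x, dvec e1 R x = dvec e2 R x) -> e1 i j -> e1 j i ->
  ~~ e2 i j -> ~~ e2 j i -> i \notin R /\ j \notin R.
Proof.
move=> Hij Hd H1 H1' H2 H2'; split; apply/negP => HA.
- have := dvec_mem (Hd j) HA.
  have Hji : j != i by rewrite eq_sym.
  have D1 : dist e1 j i = 1 by apply/eqP; rewrite dist1.
  have D2 : dist e2 j i != 1 by rewrite dist1.
  by move=> E; rewrite -E D1 in D2.
- have := dvec_mem (Hd i) HA.
  have D1 : dist e1 i j = 1 by apply/eqP; rewrite dist1.
  have D2 : dist e2 i j != 1 by rewrite dist1.
  by move=> E; rewrite -E D1 in D2.
Qed.

Lemma delta1 (e1 e : rel T) R i j : i != j -> resolving e R ->
  (forall x, dvec e1 R x = dvec e R x) -> e1 i j -> e1 j i ->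
  Delta e R i j = 1.
Proof.
move=> Hij HR Hd H1 H1'; apply/eqP; rewrite eqn_leq; apply/andP; split.
  apply/bigmax_leqP_seq => A HA _.
  rewrite -(dvec_mem (Hd i) HA) -(dvec_mem (Hd j) HA).
  have := dist_tri A H1; have := dist_tri A H1'; rewrite /absdiff; lia.
case: (boolP (has (fun A => dist e i A != dist e j A) R)) => [/hasP[A HA Hne]|Hn].
  rewrite /Delta; apply: leq_trans (leq_bigmax_seq _ HA isT).
  move: Hne; rewrite /absdiff; lia.
have : dvec e R i = dvec e R j.
  apply/eq_in_map => A HA; apply/eqP.
  by move/hasPn: Hn => /(_ A HA) /negPn.
by move/HR => E; rewrite E eqxx in Hij.
Qed.

End Aux.
Arguments mem_contra {T e1 e2 R i j}.
Arguments delta1 {T e1 e R i j}.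

Theorem lemma2 (T : finType) (e : rel T) (R : seq T)
  (He : simple_graph e) (Hc : connected_graph e) (HR : resolving e R)
  (i j : T) (Hij : i != j) :
  (invisible e R i j ->
     [/\ i \notin R, j \notin R & Delta e R i j = 1]) /\
  (ambiguous e R i j ->
     [/\ i \notin R, j \notin R & Delta e R i j = 1]).
Proof.
have Hji : j != i by rewrite eq_sym.
case: He => Hs Hirr.
split.
- move=> Hinv.
  have Tij : toggle e i j i j = ~~ e i j by rewrite /toggle !eqxx.
  have Tji : toggle e i j j i = ~~ e j i by rewrite /toggle !eqxx /= orbT.
  case: (boolP (e i j)) => Eij.
  + have Eji : e j i by rewrite Hs.
    have [Ni Nj] := mem_contra Hij (fun x => esym (Hinv x)) Eij Eji
       ltac:(by rewrite Tij Eij) ltac:(by rewrite Tji Eji).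
    by split => //; apply: (delta1 Hij HR (fun x => erefl)).
  + have Eji : ~~ e j i by rewrite Hs.
    have [Ni Nj] := mem_contra Hij Hinv ltac:(by rewrite Tij) ltac:(by rewrite Tji)
       Eij Eji.
    by split => //; apply: (delta1 Hij HR Hinv); rewrite ?Tij ?Tji.
- move=> [e1 [e2 [[[S1 I1] C1] [[S2 I2] C2] D1 D2 Hne]]].
  have D12 : forall x, dvec e1 R x = dvec e2 R x by move=> x; rewrite D1 D2.
  have D21 : forall x, dvec e2 R x = dvec e1 R x by move=> x; rewrite D1 D2.
  case: (boolP (e1 i j)) Hne => E1 Hne.
  + have E2 : ~~ e2 i j by move: Hne; case: (e2 i j).
    have [Ni Nj] := mem_contra Hij D12 E1 ltac:(by rewrite S1) E2 ltac:(by rewrite S2).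
    by split => //; apply: (delta1 Hij HR D1 E1); rewrite S1.
  + have E2 : e2 i j by move: Hne; case: (e2 i j).
    have [Ni Nj] := mem_contra Hij D21 E2 ltac:(by rewrite S2) E1 ltac:(by rewrite S1).
    by split => //; apply: (delta1 Hij HR D2 E2); rewrite S2.
Qed.
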